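(* Let $v\geq 8$ and let $C_v$ be the cyclic configuration on point set $\mathbb{Z}_v$ whose blocks are $\{m,m+1,m+3\}$ for $m\in\mathbb{Z}_v$. Then the minimum cardinality of a blocking set of $C_v$ is \[ m(v)=2\left\lfloor \frac{v}{5}\right\rfloor+\varepsilon,\quad \varepsilon=\begin{cases}0&\text{if } v\equiv 0\pmod 5,\\ 1&\text{if } v\equiv 1\pmod 5,\\ 2&\text{if } v\equiv 2,3,4\pmod 5.\end{cases}\]
   Context: A blocking set of a configuration (a set of points with a collection of 3-element blocks) is a subset $Q$ of the points such that every block contains at least one point of $Q$ and at least one point not in $Q$. *)

(* Defs.v *)
From mathcomp Require Import all_boot.
Set Implicit Arguments. Unset Strict Implicit. Unset Printing Implicit Defensive.

(* Points of C_v are Z_v, represented by 'I_v (elements 0..v-1, arithmetic mod v).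
   The block indexed by m : 'I_v is {m, m+1, m+3} (mod v). *)
Definition cyc_block (v : nat) (m : 'I_v) : {set 'I_v} :=
  [set x : 'I_v | [|| nat_of_ord x == m %% v,
                      nat_of_ord x == (m + 1) %% v
                    | nat_of_ord x == (m + 3) %% v]].

Definition blocking_set (v : nat) (Q : {set 'I_v}) : Prop :=
  forall m : 'I_v, (cyc_block m :&: Q != set0) /\ (cyc_block m :\: Q != set0).

Definition eps_v (v : nat) : nat :=
  if v %% 5 == 0 then 0 else if v %% 5 == 1 then 1 else 2.

Definition m_v (v : nat) : nat := 2 * (v %/ 5) + eps_v v.

(* Main.v *)
Require Import Defs.
From mathcomp Require Import all_boot zify.
Set Implicit Arguments. Unset Strict Implicit. Unset Printing Implicit Defensive.

Definition blkb (x : nat -> bool) m :=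
  (x m || x m.+1 || x m.+3) && ~~ [&& x m, x m.+1 & x m.+3].

Definition X n (Q : {set 'I_n.+1}) (i : nat) : bool := inord (i %% n.+1) \in Q.

Lemma val_inord_mod n i : nat_of_ord (inord (i %% n.+1) : 'I_n.+1) = i %% n.+1.
Proof. by rewrite inordK // ltn_pmod. Qed.

Lemma mem_blk n (m : nat) (y : 'I_n.+1) :
  (y \in cyc_block (inord (m %% n.+1) : 'I_n.+1)) =
  [|| y == inord (m %% n.+1), y == inord (m.+1 %% n.+1) | y == inord (m.+3 %% n.+1)].
Proof.
rewrite inE val_inord_mod modn_mod !modnDml addn1 addn3.
have e k : (nat_of_ord y == k %% n.+1) = (y == inord (k %% n.+1)).
  by apply/eqP/eqP => [<-|->]; rewrite ?inord_val ?val_inord_mod.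
by rewrite !e.
Qed.

Lemma blocking_iff n (Q : {set 'I_n.+1}) :
  blocking_set Q <-> forall m, blkb (X Q) m.
Proof.
split.
- move=> H m; have [H1 H2] := H (inord (m %% n.+1)).
  case/set0Pn: H1 => y; rewrite inE mem_blk => /andP [yb yQ].
  case/set0Pn: H2 => z; rewrite inE mem_blk => /andP [zQ zb].
  rewrite /blkb /X; apply/andP; split.
    by case/or3P: yb => /eqP <-; rewrite yQ ?orbT.
  by case/or3P: zb => /eqP eqz; move: zQ; rewrite eqz => /negbTE ->; rewrite ?andbF.
- move=> H m; have := H m; rewrite /blkb /X => /andP [h1 h2].
  rewrite -[m]inord_val -(modn_small (ltn_ord m)).
  split; apply/set0Pn.
    move: h1; rewrite -orbA => h1; case/or3P: h1 => h; [exists (inord (m %% n.+1)) | exists (inord (m.+1 %% n.+1)) | exists (inord (m.+3 %% n.+1))];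
      by rewrite inE mem_blk h eqxx ?orbT.
  move: h2; rewrite !negb_and => h2.
  case/or3P: h2 => h; [exists (inord (m %% n.+1)) | exists (inord (m.+1 %% n.+1)) | exists (inord (m.+3 %% n.+1))];
    by rewrite inE mem_blk h eqxx ?orbT.
Qed.

Definition pot (a b c : bool) : nat :=
  match a, b, c with
  | false,false,false => 0 | false,false,true => 3 | false,true,false => 4
  | false,true,true => 6 | true,false,false => 2 | true,false,true => 6
  | true,true,false => 4 | true,true,true => 6 end.

Lemma pot_loc (a b c d : bool) : (a || b || d) && ~~ [&& a, b & d] ->
  2 + pot b c d <= 5 * d + pot a b c.
Proof. by case: a; case: b; case: c; case: d. Qed.

Lemma sum_shift (v : nat) (f : nat -> nat) : f v = f 0 ->
  \sum_(m < v) f m.+1 = \sum_(m < v) f m.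
Proof.
move=> e.
have h2 : \sum_(i < v.+1) f i = \sum_(i < v.+1) f i by [].
rewrite {1}big_ord_recl big_ord_recr /= e addnC in h2.
move/eqP: h2; rewrite eqn_add2r => /eqP <-.
by apply: eq_bigr => i _.
Qed.

Lemma per_mod (v : nat) (f : nat -> nat) : (forall i, f (i + v) = f i) ->
  forall i, f (i %% v) = f i.
Proof.
move=> h i; rewrite {2}(divn_eq i v).
elim: (i %/ v) => [|q IH]; first by rewrite mul0n add0n.
by rewrite mulSn -addnA addnC h.
Qed.

Section Lower.
Variables (x : nat -> bool) (v : nat).
Hypothesis hv : 3 <= v.
Hypothesis Hper : forall i, x (i + v) = x i.
Hypothesis Hblk : forall m, blkb x m.

Let P m := pot (x m) (x m.+1) (x m.+2).
Let d m := (5 * x m.+3 + P m) - (2 + P m.+1).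

Lemma HperS k i : x (i + v + k) = x (i + k).
Proof. by rewrite addnAC Hper. Qed.

Lemma Hper' k : x (v + k) = x k.
Proof. by rewrite addnC Hper. Qed.

Lemma sumx3 : \sum_(m < v) (x m.+3 : nat) = \sum_(m < v) (x m : nat).
Proof.
rewrite (@sum_shift v (fun m => (x m.+2 : nat))); last by rewrite -addn2 Hper'.
rewrite (@sum_shift v (fun m => (x m.+1 : nat))); last by rewrite -addn1 Hper'.
by rewrite (@sum_shift v (fun m => (x m : nat))) // -[v]addn0 Hper'.
Qed.

Lemma sumP : \sum_(m < v) P m.+1 = \sum_(m < v) P m.
Proof.
apply: sum_shift; rewrite /P.
by rewrite -(Hper' 0) -(Hper' 1) -(Hper' 2) addn0 addn1 addn2.
Qed.

Lemma main_eq : 5 * \sum_(i < v) (x i : nat) = 2 * v + \sum_(m < v) d m.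
Proof.
have E : \sum_(m < v) (5 * x m.+3 + P m) = \sum_(m < v) (2 + P m.+1) + \sum_(m < v) d m.
  rewrite -big_split /=; apply: eq_bigr => m _.
  by rewrite /d subnKC //; exact: pot_loc (Hblk m).
have F : \sum_(m < v) 5 * (x m.+3 : nat) = 5 * \sum_(m < v) (x m : nat).
  by rewrite -sumx3 big_distrr.
rewrite big_split /= F in E.
rewrite big_split /= sumP sum_nat_const card_ord in E.
move/eqP: E; rewrite [X in _ == X]addnAC eqn_add2r => /eqP ->; by rewrite mulnC.
Qed.

Lemma dper i : d (i + v) = d i.
Proof.
by rewrite /d /P -!addSn !Hper.
Qed.

Lemma D_ne1 : \sum_(m < v) d m != 1.
Proof.
apply/eqP => D1.
have [j dj] : exists j : 'I_v, 0 < d j.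
  apply/existsP; apply: contraT; rewrite negb_exists => /forallP H.
  rewrite (eq_bigr (fun _ => 0)) ?big1 // in D1 => i _.
  by move: (H i); rewrite lt0n negbK => /eqP.
rewrite (bigD1 j) //= in D1.
have dj1 : d j = 1 by lia.
have rest : forall i : 'I_v, i != j -> d i = 0.
  have : \sum_(i < v | i != j) d i == 0.
    by move: D1; rewrite dj1 add1n => -[->].
  rewrite sum_nat_eq0 => /forallP H i ij.
  by move: (H i); rewrite ij /= => /eqP.
have v0 : 0 < v by lia.
have neq k : 0 < k < v -> Ordinal (ltn_pmod (j + k) v0) != j.
  move=> hk; apply/eqP => /(congr1 val) /= /eqP.
  rewrite -{2}(modn_small (ltn_ord j)) -{2}[nat_of_ord j]addn0 eqn_modDl mod0n.
  by rewrite modn_small; lia.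
set u := j + (v - 2).
have du : d u = 0.
  have := rest _ (neq (v - 2) ltac:(lia)); rewrite /= (per_mod dper) //.
have du1 : d u.+1 = 0.
  have := rest _ (neq (v - 1) ltac:(lia)); rewrite /= (per_mod dper).
  by have -> : j + (v - 1) = u.+1 by rewrite /u; lia.
have e2 : x u.+2 = x j by rewrite -(Hper j); congr x; rewrite /u; lia.
have e3 : x u.+3 = x j.+1 by rewrite -(Hper j.+1); congr x; rewrite /u; lia.
have e4 : x u.+4 = x j.+2 by rewrite -(Hper j.+2); congr x; rewrite /u; lia.
have b0 := Hblk u; have b1 := Hblk u.+1; have b2 := Hblk j.
move: du du1 dj1 b0 b1 b2; rewrite /d /P /blkb e2 e3 e4.
case: (x u); case: (x u.+1); case: (x j); case: (x j.+1); case: (x j.+2);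
  case: (x j.+3) => //.
Qed.

End Lower.


Lemma card_sumX n (Q : {set 'I_n.+1}) : #|Q| = \sum_(i < n.+1) (X Q i : nat).
Proof.
rewrite -sum1_card big_mkcond /=; apply: eq_bigr => i _.
by rewrite /X modn_small // inord_val; case: (i \in Q).
Qed.

Lemma Xper n (Q : {set 'I_n.+1}) i : X Q (i + n.+1) = X Q i.
Proof. by rewrite /X modnDr. Qed.

Lemma lower n (Q : {set 'I_n.+1}) : 8 <= n.+1 -> blocking_set Q -> m_v n.+1 <= #|Q|.
Proof.
move=> hv /blocking_iff Hb.
have h3 : 3 <= n.+1 by lia.
have E := main_eq (@Xper n Q) Hb.
have N := D_ne1 h3 (@Xper n Q) Hb.
rewrite -card_sumX in E.
move: E N.
set D := \sum_(m < n.+1) _ => E N.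
have N' : D <> 1 by move/eqP: N.
rewrite /m_v /eps_v.
have ev := divn_eq n.+1 5.
have hr : n.+1 %% 5 < 5 by rewrite ltn_pmod.
move: ev hr; set q := n.+1 %/ 5; set r := n.+1 %% 5 => ev hr.
case: r ev hr => [|[|[|[|[|r]]]]] //= ev hr; clearbody q D; move: #|Q| E => c E; lia.
Qed.

Section Constr.
Variables (a L : nat) (W : seq bool).
Hypothesis a0 : 0 < a.
Hypothesis sW : size W = L.
Let g := [:: false; false; false] ++ W ++ [:: true; true; false].
Hypothesis HW : all (blkb (nth false g)) (iota 0 (L + 3)).

Definition qf (i : nat) : bool := if i < 5 * a then i %% 5 < 2 else nth false W (i - 5 * a).
Let v := 5 * a + L.

Lemma xg s : s < L + 6 -> qf ((5 * a - 3 + s) %% v) = nth false g s.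
Proof.
move=> hs; rewrite /qf /g.
case: (ltnP s 3) => h3.
  rewrite modn_small; last by rewrite /v; lia.
  have -> : 5 * a - 3 + s < 5 * a by lia.
  have -> : 5 * a - 3 + s = (a - 1) * 5 + (s + 2) by lia.
  rewrite modnMDl modn_small; last by lia.
  by case: s h3 {hs} => [|[|[|]]].
case: (ltnP s (L + 3)) => hL.
  rewrite modn_small; last by rewrite /v; lia.
  have -> : 5 * a - 3 + s < 5 * a = false by apply/negbTE; lia.
  have -> : 5 * a - 3 + s - 5 * a = s - 3 by lia.
  rewrite nth_cat ifN; last by rewrite /=; lia.
  rewrite nth_cat sW ifT; last by rewrite /=; lia.
  done.
have -> : 5 * a - 3 + s = v + (s - 3 - L) by rewrite /v; lia.
rewrite modnDl modn_small; last by rewrite /v; lia.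
have -> : s - 3 - L < 5 * a by lia.
rewrite modn_small; last by lia.
rewrite nth_cat ifN; last by rewrite /=; lia.
rewrite nth_cat sW ifN; last by rewrite /=; lia.
have -> : s - size [:: false; false; false] - L = s - 3 - L by [].
have : s - 3 - L < 3 by lia.
by case: (s - 3 - L) => [|[|[|]]].
Qed.

Lemma blk_all m : blkb (fun i => qf (i %% v)) m.
Proof.
have hm : m %% v < v by rewrite ltn_pmod // /v; lia.
have e k : qf ((m + k) %% v) = qf ((m %% v + k) %% v) by rewrite modnDml.
have e0 := e 0; have e1 := e 1; have e3 := e 3.
rewrite !addn0 in e0; rewrite !addn1 in e1; rewrite !addn3 in e3.
rewrite /blkb e0 e1 e3.
move: (m %% v) hm => {e e0 e1 e3} m hm.
case: (ltnP (m + 3) (5 * a)) => h.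
  rewrite (modn_small hm) (@modn_small m.+1) ?(@modn_small m.+3); try lia.
  rewrite /qf.
  have -> : m < 5 * a by lia.
  have -> : m.+1 < 5 * a by lia.
  have -> : m.+3 < 5 * a by lia.
  have f1 : m.+1 %% 5 = (m %% 5).+1 %% 5 by rewrite -(addn1 m) -(addn1 (m %% 5)) modnDml.
  have f3 : m.+3 %% 5 = (m %% 5).+3 %% 5 by rewrite -(addn3 m) -(addn3 (m %% 5)) modnDml.
  rewrite f1 f3.
  move: (m %% 5) (ltn_pmod m (isT : 0 < 5)) => r hr.
  by case: r hr => [|[|[|[|[|]]]]].
set t := m - (5 * a - 3).
have -> : m = 5 * a - 3 + t by rewrite /t; lia.
have ht : t < L + 3 by rewrite /t /v in hm *; lia.
rewrite -!addnS !xg; try lia.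
have := allP HW t; rewrite mem_iota add0n => H.
exact: H.
Qed.

Lemma sum5 k : \sum_(0 <= i < 5 * k) ((i %% 5 < 2) : nat) = 2 * k.
Proof.
elim: k => [|k IH]; first by rewrite muln0 big_geq.
rewrite mulnS addnC (big_cat_nat (leq0n _) (leq_addr 5 _)) /= IH.
have -> : \sum_(5 * k <= i < 5 * k + 5) ((i %% 5 < 2) : nat) =
          \sum_(0 <= i < 5) (((i + 5 * k) %% 5 < 2) : nat).
  by rewrite -{1}[5 * k]add0n big_addn addKn.
rewrite (eq_bigr (fun i => ((i %% 5 < 2) : nat))); last first.
  by move=> i _; rewrite addnC mulnC modnMDl.
rewrite /index_iota /= !big_cons big_nil /=.
lia.
Qed.

Lemma sum_count (s : seq bool) : \sum_(0 <= i < size s) (nth false s i : nat) = count id s.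
Proof.
elim: s => [|b s IH]; first by rewrite big_geq.
by rewrite /= big_nat_recl // IH.
Qed.

Lemma constr n : n.+1 = v ->
  blocking_set [set i : 'I_n.+1 | qf i] /\ #|[set i : 'I_n.+1 | qf i]| = 2 * a + count id W.
Proof.
move=> hv; split.
  apply/blocking_iff => m.
  have E i : X [set i : 'I_n.+1 | qf i] i = qf (i %% v).
    by rewrite /X inE val_inord_mod hv.
  rewrite /blkb !E; exact: blk_all.
rewrite -sum1_card big_mkcond /=.
rewrite (eq_bigr (fun i : 'I_n.+1 => (qf i : nat))); last first.
  by move=> i _; rewrite inE; case: (qf i).
rewrite -(big_mkord xpredT (fun i => (qf i : nat))) hv /v.
rewrite (big_cat_nat (leq0n _) (leq_addr L _)) /=.
rewrite (@eq_big_nat _ _ _ 0 (5 * a) _ (fun i => ((i %% 5 < 2) : nat))); last first.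
  by move=> i hi; rewrite /qf ifT //; lia.
rewrite sum5 -{1}[5 * a]add0n big_addn addKn.
rewrite (@eq_big_nat _ _ _ 0 L _ (fun i => (nth false W i : nat))); last first.
  by move=> i hi; rewrite /qf ifF ?addnK //; lia.
by rewrite -sW sum_count.
Qed.

End Constr.

Lemma use_constr n a (W : seq bool) : 0 < a ->
  all (blkb (nth false ([:: false; false; false] ++ W ++ [:: true; true; false])))
      (iota 0 (size W + 3)) ->
  n.+1 = 5 * a + size W ->
  exists Q : {set 'I_n.+1}, blocking_set Q /\ #|Q| = 2 * a + count id W.
Proof.
move=> a0 HW hv.
have [B C] := @constr a (size W) W a0 erefl HW n hv.
by exists [set i : 'I_n.+1 | qf a W i].
Qed.

Lemma case8 : exists Q : {set 'I_8}, blocking_set Q /\ #|Q| = 4.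
Proof.
exists [set i : 'I_8 | i %% 4 < 2]; split.
  apply/blocking_iff => m.
  have E i : X [set i : 'I_8 | i %% 4 < 2] i = (i %% 4 < 2).
    by rewrite /X inE val_inord_mod modn_dvdm.
  rewrite /blkb !E.
  have f1 : m.+1 %% 4 = (m %% 4).+1 %% 4 by rewrite -(addn1 m) -(addn1 (m %% 4)) modnDml.
  have f3 : m.+3 %% 4 = (m %% 4).+3 %% 4 by rewrite -(addn3 m) -(addn3 (m %% 4)) modnDml.
  rewrite f1 f3.
  move: (m %% 4) (ltn_pmod m (isT : 0 < 4)) => r hr.
  by case: r hr => [|[|[|[|]]]].
rewrite (@card_sumX 7 [set i : 'I_8 | i %% 4 < 2]).
rewrite (eq_bigr (fun i : 'I_8 => ((i %% 4 < 2) : nat))); last first.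
  by move=> i _; rewrite /X inE val_inord_mod modn_dvdm.
rewrite -(big_mkord xpredT (fun i => ((i %% 4 < 2) : nat))).
by rewrite /index_iota /= !big_cons big_nil.
Qed.

Theorem mainTheorem4 (v : nat) (hv : 8 <= v) :
  (exists Q : {set 'I_v}, blocking_set Q /\ #|Q| = m_v v) /\
  (forall Q : {set 'I_v}, blocking_set Q -> m_v v <= #|Q|).
Proof.
case: v hv => [//|n] hv.
split; last by move=> Q HQ; exact: lower hv HQ.
have ev := divn_eq n.+1 5.
have hr : n.+1 %% 5 < 5 by rewrite ltn_pmod.
rewrite /m_v /eps_v.
move: ev hr; set q := n.+1 %/ 5; set r := n.+1 %% 5 => ev hr.
clearbody q r.
case: r ev hr => [|[|[|[|[|r]]]]] //= ev hr.
- have [Q [HQ CQ]] := @use_constr n q [::] ltac:(lia) erefl ltac:(rewrite ev /=; lia).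
  by exists Q; rewrite CQ.
- have [Q [HQ CQ]] := @use_constr n q [:: true] ltac:(lia) erefl ltac:(rewrite ev /=; lia).
  by exists Q; split => //; rewrite CQ /=; lia.
- have [Q [HQ CQ]] := @use_constr n (q - 1) [:: true; true; true; false; false; false; true]
    ltac:(lia) erefl ltac:(rewrite ev /=; lia).
  by exists Q; split => //; rewrite CQ /=; lia.
- have [q1|q2] := leqP q 1.
    have e8 : n = 7 by lia.
    subst n; have -> : q = 1 by lia.
    exact: case8.
  have [Q [HQ CQ]] := @use_constr n (q - 1) [:: true; true; false; false; true; true; false; false]
    ltac:(lia) erefl ltac:(rewrite ev /=; lia).
  by exists Q; split => //; rewrite CQ /=; lia.
- have [Q [HQ CQ]] := @use_constr n q [:: true; true; false; false] ltac:(lia) erefl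
    ltac:(rewrite ev /=; lia).
  by exists Q; split => //; rewrite CQ /=; lia.
Qed.
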